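(* For every $\delta\in(0,1)$ and $w\in(0,1)$ there exists a model class $\mathcal{M}=\{\mu,\nu\}$ of probability measures on $\mathcal{A}^\infty$ (for some finite alphabet $\mathcal{A}$) such that, with prior $w_\mu=w$, $w_\nu=1-w$ and Bayes mixture $\xi$, with $\mu$-probability at least $\delta$ it holds that $$D_\infty > \frac{1}{4\ln 2}\ln\frac{1}{\delta}\left(\ln\frac{1}{\delta}+2\ln\frac{1-w}{w}-3\ln 2\right).$$
   Context: $\mathcal{A}^\infty$ is the set of infinite sequences over $\mathcal{A}$ with the $\sigma$-algebra generated by cylinder sets $\Gamma_x=\{x\omega\}$, $x$ a finite string. For a probability measure $\rho$ write $\rho(x):=\rho(\Gamma_x)$, $\rho(y|x):=\rho(xy)/\rho(x)$. The Bayes mixture is $\xi(A):=w_\mu\mu(A)+w_\nu\nu(A)$. Logarithms are natural. For a finite string $x$, $d_x(\mu,\xi):=\sum_{a\in\mathcal{A}}\mu(a|x)\ln\frac{\mu(a|x)}{\xi(a|x)}$; for $\omega\in\mathcal{A}^\infty$, $d_t(\omega):=d_{\omega_{<t}}(\mu,\xi)$ where $\omega_{<t}=\omega_1\cdots\omega_{t-1}$, and $D_\infty:=\sum_{t=1}^\infty d_t$. *)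

(* Defs.v *)
From HB Require Import structures.
From mathcomp Require Import all_boot all_order all_algebra.
From mathcomp Require Import all_classical all_reals all_analysis.

Set Implicit Arguments.
Unset Strict Implicit.
Unset Printing Implicit Defensive.

Import Order.TTheory GRing.Theory Num.Theory.
Local Open Scope classical_set_scope.
Local Open Scope ring_scope.

Definition Aseq (k : nat) := nat -> 'I_k.+1.
HB.instance Definition _ (k : nat) := gen_eqMixin (Aseq k).
HB.instance Definition _ (k : nat) := gen_choiceMixin (Aseq k).
HB.instance Definition _ (k : nat) :=
  isPointed.Build (Aseq k) (fun _ : nat => (ord0 : 'I_k.+1)).

Definition cyl (k : nat) (x : seq 'I_k.+1) : set (Aseq k) :=
  [set om | forall i : nat, (i < size x)%N -> om i = nth ord0 x i].

Definition cylinders (k : nat) : set (set (Aseq k)) := range (@cyl k).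

Definition CylSpace (k : nat) := g_sigma_algebraType (@cylinders k).

Section KL.
Variables (R : realType) (k : nat).

Definition cylp (rho : probability (CylSpace k) R) (x : seq 'I_k.+1) : R :=
  fine (rho (cyl x : set (CylSpace k))).

Definition mixp (w : R) (mu nu : probability (CylSpace k) R)
  (x : seq 'I_k.+1) : R :=
  w * cylp mu x + (1 - w) * cylp nu x.

Definition condp (rho : seq 'I_k.+1 -> R) (y x : seq 'I_k.+1) : R :=
  rho (x ++ y) / rho x.

Definition dKL (w : R) (mu nu : probability (CylSpace k) R)
  (x : seq 'I_k.+1) : R :=
  \sum_(a : 'I_k.+1)
     condp (cylp mu) [:: a] x *
     ln (condp (cylp mu) [:: a] x / condp (mixp w mu nu) [:: a] x).

(* omega_{<t} for t = n+1 : the first n symbols *)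
Definition prefix (om : Aseq k) (n : nat) : seq 'I_k.+1 :=
  [seq om i | i <- iota 0 n].

Definition Dinf (w : R) (mu nu : probability (CylSpace k) R) (om : Aseq k)
  : \bar R :=
  (\sum_(0 <= n <oo) (dKL w mu nu (prefix om n))%:E)%E.

End KL.

(* Main.v *)
Require Import Defs.
From HB Require Import structures.
From mathcomp Require Import all_boot all_order all_algebra.
From mathcomp Require Import all_classical all_reals all_analysis.
From mathcomp Require Import ring lra zify.
Import Order.TTheory GRing.Theory Num.Theory.
Local Open Scope classical_set_scope.
Local Open Scope ring_scope.
Section Reals.
Variable R : realType.

Definition gq (l c x : R) := l / 4 * x ^+ 2 + x * (c / 2 - 3 * l / 4).

Lemma sum_bound (l c : R) (K : nat -> R) (m : nat) :
  (forall n, (n < m)%N -> 1 / 2 * (c + (n%:R - 1) * l) < K n) ->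
  forall j, (0 < j)%N -> (j <= m)%N -> gq l c j%:R < \sum_(n < j) K n.
Proof.
move=> HK; elim => [//|j IH] _ Hj.
rewrite big_ord_recr /=.
have Kj := HK j Hj.
case: j IH Hj Kj => [|j] IH Hj Kj.
  rewrite big_ord0 add0r; move: Kj; rewrite /gq; lra.
have IH' := IH isT (ltnW Hj).
move: IH' Kj; rewrite /gq -[j.+2]addn1 -[j.+1]addn1 !natrD; lra.
Qed.

Lemma final_ineq (l L c M S : R) : 0 < l -> 0 < L -> L / l < M ->
  gq l c M < S -> 0 <= S ->
  (1 / (4 * l)) * L * (L + 2 * c - 3 * l) < S.
Proof.
move=> l0 L0 HM Hg S0.
set x := L / l.
have Lx : L = x * l by rewrite /x mulrVK // unitfE gt_eqF.
have x0 : 0 < x by rewrite /x divr_gt0.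
have -> : (1 / (4 * l)) * L * (L + 2 * c - 3 * l) = gq l c x.
  rewrite /gq Lx; field; rewrite gt_eqF //.
move: Hg; rewrite /gq => Hg.
have [F0|F0] := leP 0 (l / 4 * (M + x) + c / 2 - 3 * l / 4).
  have : l / 4 * x ^+ 2 + x * (c / 2 - 3 * l / 4) <= l / 4 * M ^+ 2 + M * (c / 2 - 3 * l / 4).
    rewrite -subr_ge0.
    have -> : l / 4 * M ^+ 2 + M * (c / 2 - 3 * l / 4) - (l / 4 * x ^+ 2 + x * (c / 2 - 3 * l / 4)) = (M - x) * (l / 4 * (M + x) + c / 2 - 3 * l / 4) by ring.
    by rewrite mulr_ge0 // subr_ge0 ltW.
  lra.
have lMx : 0 < l * (M - x) by rewrite mulr_gt0 // subr_gt0.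
have lx : 0 < x * l by rewrite mulr_gt0.
have : x * l + 2 * c - 3 * l < 0.
  move: F0 lMx lx; rewrite mulrBr; lra.
move=> H; have : x * (x * l + 2 * c - 3 * l) < 0 by nra.
nra.
Qed.
End Reals.
Section Construction.
Variable R : realType.
Local Notation T := (CylSpace 1).

Definition zp : T := fun _ => ord0.
Definition qp (m i : nat) : T := fun t => if (t == i) && (i < m)%N then ord_max else ord0.
Definition hh (n : nat) : R := (2^-1) ^+ n.
Definition cw (m i : nat) : R := if (i < m)%N then hh i.+1 else hh m.
Lemma hh_gt0 n : 0 < hh n.
Proof. by rewrite /hh exprn_gt0 // invr_gt0. Qed.
Lemma hhS n : hh n.+1 + hh n.+1 = hh n.
Proof. by rewrite /hh exprS; field. Qed.
Lemma cw_ge0 m i : 0 <= cw m i.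
Proof. by rewrite /cw; case: ifP => _; apply/ltW/hh_gt0. Qed.
Definition cwn m i : {nonneg R} := NngNum (cw_ge0 m i).
Definition muM (m : nat) := msum (fun i => mscale (cwn m i) (@dirac _ T (qp m i) R)) m.+1.

Lemma muME m A : muM m A = (\sum_(i < m.+1) cw m i * (qp m i \in A)%:R)%:E.
Proof.
rewrite /muM /msum -sumEFin; apply: eq_bigr => i _.
transitivity ((cw m i)%:E * \d_(qp m i) A)%E; first by [].
by rewrite diracE -EFinM.
Qed.

Lemma tail_sum m d : (d <= m)%N -> \sum_(m - d <= i < m.+1) cw m i = hh (m - d).
Proof.
elim: d => [|d IH] Hd.
  by rewrite subn0 big_nat1 /cw ltnn.
rewrite big_ltn; last lia.
have E1 : ((m - d.+1).+1 = m - d)%N by lia.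
rewrite E1 IH; last lia.
rewrite /cw ifT; last lia.
by rewrite E1 -E1 hhS.
Qed.

Lemma muM_setT m : muM m setT = 1%E.
Proof.
rewrite muME.
under eq_bigr do rewrite in_setT mulr1.
rewrite -(big_mkord xpredT (cw m)).
by have := @tail_sum m m (leqnn m); rewrite subnn => ->.
Qed.

HB.instance Definition _ m := Measure.on (muM m).
HB.instance Definition _ m := Measure_isProbability.Build _ _ _ (muM m) (muM_setT m).


Lemma mem0 m i j : (qp m i \in cyl (nseq j (ord0 : 'I_2))) = ~~ ((i < j) && (i < m))%N.
Proof.
case: (boolP ((i < j) && (i < m))%N) => /= H.
  apply/negP; rewrite in_setE => /(_ i).
  rewrite size_nseq nth_nseq /qp eqxx.
  by case/andP: H => -> -> /(_ isT).
apply/idP; rewrite in_setE => t; rewrite size_nseq nth_nseq => tj; rewrite tj.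
rewrite /qp; case: (eqVneq t i) => [ti|] //=; subst t.
by move: H; rewrite tj /=; case: (i < m)%N.
Qed.

Lemma mem1 m i j (b : 'I_2) : b != ord0 ->
  (qp m i \in cyl (nseq j (ord0 : 'I_2) ++ [:: b])) = ((i == j) && (j < m))%N.
Proof.
move=> b0.
have bE : b = ord_max by apply/val_inj; case: b b0 => [[|[|]]] //.
case: (boolP ((i == j) && (j < m))%N) => /= H.
  case/andP: H => /eqP -> jm.
  apply/idP; rewrite in_setE => t; rewrite size_cat size_nseq addn1 ltnS => tj.
  rewrite nth_cat size_nseq /qp jm andbT.
  case: (ltngtP t j) tj => // [tj _|-> _]; first by rewrite nth_nseq tj; case: (eqVneq t i) => // ti; subst; rewrite ltn_eqF.
  by rewrite subnn bE.
apply/negbTE/negP; rewrite in_setE => Hc.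
have := Hc j; rewrite size_cat size_nseq addn1 ltnS leqnn => /(_ isT).
rewrite nth_cat size_nseq ltnn subnn /= bE /qp.
case: (eqVneq j i) => [ji|ji] /=.
  move: H; rewrite ji eqxx /= => /negbTE ->.
  by move/(congr1 val).
by move/(congr1 val).
Qed.

Lemma cylpM m x : cylp (muM m) x = \sum_(i < m.+1) cw m i * (qp m i \in cyl x)%:R.
Proof. by transitivity (fine (muM m (cyl x : set T))); rewrite // muME. Qed.

Lemma cylp0_le m j : (j <= m)%N -> cylp (muM m) (nseq j ord0) = hh j.
Proof.
move=> jm; rewrite cylpM.
under eq_bigr do rewrite mem0.
rewrite -(big_mkord xpredT (fun i => cw m i * (~~ ((i < j)%N && (i < m)%N))%:R)).
rewrite (@big_cat_nat _ _ _ j) //=; last by rewrite ltnW.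
rewrite big1_seq /= ?add0r; last first.
  move=> i; rewrite mem_index_iota => /andP[_ ij].
  by rewrite ij (leq_trans ij jm) mulr0.
have := @tail_sum m (m - j) (leq_subr _ _); rewrite subKn // => <-.
apply: eq_big_nat => i /andP[ji _].
by rewrite ltnNge ji /= mulr1.
Qed.

Lemma cylp0_ge m j : (m <= j)%N -> cylp (muM m) (nseq j ord0) = hh m.
Proof.
move=> mj; rewrite cylpM.
under eq_bigr do rewrite mem0.
rewrite big_ord_recr /= ltnn andbF mulr1 /cw ltnn big1 ?add0r // => i _.
by rewrite ltn_ord (leq_trans (ltn_ord i) mj) mulr0.
Qed.

Lemma cylp1 m j (b : 'I_2) : b != ord0 ->
  cylp (muM m) (nseq j ord0 ++ [:: b]) = if (j < m)%N then hh j.+1 else 0.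
Proof.
move=> b0; rewrite cylpM.
under eq_bigr do rewrite mem1 //.
case: ifP => jm.
  rewrite (bigD1 (Ordinal (ltnW jm : (j < m.+1)%N))) //= eqxx /= mulr1.
  rewrite big1 ?addr0; first by rewrite /cw jm.
  by move=> i; rewrite andbT -val_eqE /= => /negbTE ->; rewrite mulr0.
by rewrite big1 // => i _; rewrite andbF mulr0.
Qed.

Lemma cylpz x : @cylp R 1 \d_zp x = (zp \in cyl x)%:R.
Proof. by transitivity (fine (@dirac _ T zp R (cyl x))); rewrite // diracE. Qed.

Lemma zmem0 j : zp \in cyl (nseq j (ord0 : 'I_2)).
Proof. by apply/idP; rewrite in_setE => t; rewrite size_nseq nth_nseq => ->. Qed.

Lemma zmemN (x : seq 'I_2) : zp \in cyl x -> x = nseq (size x) ord0.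
Proof.
rewrite in_setE => H; apply: (@eq_from_nth _ ord0); rewrite ?size_nseq // => i ix.
by rewrite nth_nseq ix -H.
Qed.

Lemma nseqSr j : nseq j.+1 (ord0 : 'I_2) = nseq j ord0 ++ [:: ord0].
Proof. by elim: j => //= j <-. Qed.

Lemma zmem_cat (x y : seq 'I_2) : zp \in cyl (x ++ y) -> zp \in cyl x.
Proof.
rewrite !in_setE => H t tx; rewrite H ?size_cat ?ltn_addr // nth_cat tx //.
Qed.

Lemma zmem1 j (b : 'I_2) : b != ord0 -> zp \notin cyl (nseq j ord0 ++ [:: b]).
Proof.
move=> b0; apply/negP => /zmemN; rewrite size_cat size_nseq addn1 nseqSr.
by move/eqP; rewrite eqseq_cat ?size_nseq // eqxx /= eqseq_cons andbT (negbTE b0).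
Qed.

Variables (w : R).
Hypothesis w0 : 0 < w.
Hypothesis w1 : w < 1.
Lemma X_gt0 u : 0 < u -> 0 < w * u + (1 - w) * 1.
Proof. by move=> u0; rewrite mulr1 addr_gt0 ?mulr_gt0 // subr_gt0. Qed.
Local Notation D m := (dKL w (muM m) \d_zp).

Lemma dKL_gen m x : zp \notin cyl x -> D m x = 0.
Proof.
move=> zx; rewrite /dKL big1 // => a _.
have zxa : zp \notin cyl (x ++ [:: a]) by apply: contra zx; apply: zmem_cat.
rewrite /condp /mixp !cylpz (negbTE zx) (negbTE zxa) !mulr0 !addr0.
set A := cylp _ (x ++ _); set B := cylp _ x.
have -> : (w * A) / (w * B) = A / B by rewrite invfM mulrACA divff ?gt_eqF // mul1r.
have [->|AB] := eqVneq (A / B) 0; first by rewrite mul0r.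
by rewrite divff // ln1 mulr0.
Qed.

Lemma l1_neq0 : (lift ord0 ord0 : 'I_2) != ord0. Proof. by []. Qed.

Lemma dKL_tail m n : (m <= n)%N -> D m (nseq n ord0) = 0.
Proof.
move=> mn; rewrite /dKL big_ord_recl big_ord1.
rewrite /condp /mixp !cylpz -nseqSr (@cylp0_ge m n mn) (@cylp0_ge m n.+1 (leqW mn)).
rewrite (@cylp1 m n _ l1_neq0) ltnNge mn /= !zmem0 (negbTE (@zmem1 n _ l1_neq0)).
have := zmem0 n.+1; rewrite /= => ->.
rewrite !mul0r /= addr0 (divff (lt0r_neq0 (hh_gt0 m))) mul1r.
by rewrite divff ?gt_eqF ?X_gt0 ?hh_gt0 // divr1 ln1.
Qed.

Lemma dKL_head m n : (n < m)%N -> D m (nseq n ord0) =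
  1 / 2 * ln ((w * hh n + (1 - w)) / (w * hh n + 2 * (1 - w))) +
  1 / 2 * ln ((w * hh n + (1 - w)) / (w * hh n)).
Proof.
move=> nm; rewrite /dKL big_ord_recl big_ord1.
rewrite /condp /mixp !cylpz -nseqSr (@cylp0_le m n (ltnW nm)) (@cylp0_le m n.+1 nm).
rewrite (@cylp1 m n _ l1_neq0) nm !zmem0 (negbTE (@zmem1 n _ l1_neq0)) /=.
have hS : hh n.+1 = hh n / 2 by rewrite /hh exprS mulrC.
rewrite hS.
have u0 := hh_gt0 n.
set u := hh n.
have hu : u != 0 by rewrite gt_eqF.
have hw : w != 0 by rewrite gt_eqF.
have h2 : (2:R) != 0 by rewrite pnatr_eq0.
have hb : 1 - w != 0 by rewrite gt_eqF // subr_gt0.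
have hX : w * u + (1 - w) != 0 by rewrite gt_eqF // addr_gt0 ?mulr_gt0 // subr_gt0.
have hY : w * u + 2 * (1 - w) != 0 by rewrite gt_eqF // addr_gt0 ?mulr_gt0 // ?mulr_gt0 // subr_gt0.
congr (_ * ln _ + _ * ln _); by field; rewrite ?hX ?hY ?hu ?hw.
Qed.

Lemma kl_real (a b : R) : 0 < a -> 0 < b ->
  0 <= 1 / 2 * ln ((a + b) / (a + 2 * b)) + 1 / 2 * ln ((a + b) / a) /\
  1 / 2 * ln (b / (2 * a)) < 1 / 2 * ln ((a + b) / (a + 2 * b)) + 1 / 2 * ln ((a + b) / a).
Proof.
move=> a0 b0.
have ab0 : 0 < a + b by rewrite addr_gt0.
have a2b0 : 0 < a + 2 * b by rewrite addr_gt0 // mulr_gt0.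
rewrite -mulrDr -lnM ?posrE ?divr_gt0 //.
set P := ((a + b) / (a + 2 * b) * ((a + b) / a)).
have P1 : 1 <= P.
  rewrite -subr_ge0.
  have -> : P - 1 = b ^+ 2 / (a * (a + 2 * b)).
    rewrite /P; field; rewrite ?gt_eqF //.
  by rewrite divr_ge0 ?sqr_ge0 // mulr_ge0 // ltW.
have P2 : b / (2 * a) < P.
  rewrite -subr_gt0.
  have -> : P - b / (2 * a) = (2 * a + 3 * b) / (2 * (a + 2 * b)).
    rewrite /P; field; rewrite ?gt_eqF ?pnatr_eq0 //.
  by rewrite divr_gt0 // ?addr_gt0 ?mulr_gt0.
split; first by rewrite mulr_ge0 // ln_ge0.
rewrite ltr_pM2l // ?ltr_ln ?posrE ?divr_gt0 ?mulr_gt0 //.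
all: by rewrite invr_gt0.
Qed.

Lemma KL_bound m n : (n < m)%N ->
  0 <= D m (nseq n ord0) /\
  1 / 2 * (ln ((1 - w) / w) + (n%:R - 1) * ln 2) < D m (nseq n ord0).
Proof.
move=> nm; rewrite dKL_head //.
have a0 : 0 < w * hh n by rewrite mulr_gt0 ?hh_gt0.
have b0 : 0 < 1 - w by rewrite subr_gt0.
have [H1 H2] := @kl_real _ _ a0 b0.
split=> //; apply: le_lt_trans H2; rewrite le_eqVlt; apply/orP; left; apply/eqP.
congr (_ * _).
have hn := hh_gt0 n.
rewrite [RHS]ln_div ?posrE ?mulr_gt0 // lnM ?posrE ?mulr_gt0 // lnM ?posrE //.
rewrite ln_div ?posrE //.
rewrite /hh lnXn ?invr_gt0 // lnV ?posrE // mulNrn -mulr_natl.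
ring.
Qed.

Lemma prefix_size (om : T) n : size (Defs.prefix om n) = n.
Proof. by rewrite /Defs.prefix size_map size_iota. Qed.

Lemma nth_prefix (om : T) n i : (i < n)%N -> nth ord0 (Defs.prefix om n) i = om i.
Proof.
move=> ii; rewrite /Defs.prefix (nth_map 0%N) ?size_iota // nth_iota //.
Qed.

Lemma prefix_zp n : Defs.prefix zp n = nseq n ord0.
Proof.
apply: (@eq_from_nth _ ord0); rewrite ?prefix_size ?size_nseq // => i ii.
by rewrite nth_prefix // nth_nseq ii.
Qed.

Lemma dKL_tail_any m x : (m <= size x)%N -> D m x = 0.
Proof.
move=> mx; case: (boolP (zp \in cyl x)) => [/zmemN ->|H].
  exact: dKL_tail.
exact: dKL_gen.
Qed.

Lemma eseries_fin (u : nat -> R) N : (forall n, (N <= n)%N -> u n = 0) ->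
  (\sum_(0 <= n <oo) (u n)%:E)%E = (\sum_(n < N) u n)%:E.
Proof.
move=> u0; apply: cvg_lim => //; apply: cvg_near_cst.
near=> n.
rewrite sumEFin; congr EFin.
rewrite (@big_cat_nat _ _ _ N) //=; last by near: n; exact: nbhs_infty_ge.
rewrite [X in _ + X]big1_seq ?addr0 ?big_mkord // => i.
by move=> /andP[_]; rewrite mem_index_iota => /andP[Ni _]; rewrite u0.
Unshelve. all: by end_near. Qed.

Lemma Dinf_agree m (om om' : T) : (forall i, (i.+1 < m)%N -> om i = om' i) ->
  Dinf w (muM m) \d_zp om = Dinf w (muM m) \d_zp om'.
Proof.
move=> H; rewrite /Dinf.
have E n : D m (Defs.prefix om n) = D m (Defs.prefix om' n).
  case: (ltnP n m) => nm.
    congr (D m _); rewrite /Defs.prefix; apply/eq_in_map => i.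
    rewrite mem_iota add0n => /andP[_ ii]; apply: H.
    exact: leq_ltn_trans ii nm.
  by rewrite !dKL_tail_any ?prefix_size.
by under eq_fun do under eq_bigr do rewrite E.
Qed.

Lemma Dinf_zp m : Dinf w (muM m) \d_zp zp = (\sum_(n < m) D m (nseq n ord0))%:E.
Proof.
rewrite /Dinf (@eseries_fin (fun n => D m (Defs.prefix zp n)) m).
  by under eq_bigr do rewrite prefix_zp.
by move=> n mn; rewrite dKL_tail_any // prefix_size.
Qed.

Definition ext m (t : m.-tuple 'I_2) : T := fun i => nth ord0 t i.
Arguments ext {m}.

Lemma measurable_pred m (P : \bar R -> Prop) :
  measurable [set om : T | P (Dinf w (muM m) \d_zp om)].
Proof.
set E := [set om : T | _].
have -> : E = \bigcup_(t in [set: m.-tuple 'I_2]) [set om : T | cyl t om /\ E (ext t)].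
  apply/seteqP; split => om.
    move=> Eom.
    have pf : size (Defs.prefix om m) == m by rewrite prefix_size.
    exists (Tuple pf) => //; split.
      by move=> i; rewrite /= prefix_size => im; rewrite nth_prefix.
    rewrite /E /= -(@Dinf_agree m om) // => i im.
    by rewrite /ext /= nth_prefix // ltnW.
  case=> t _ [Ct Et]; rewrite /E /= (@Dinf_agree m om (ext t)) //.
  by move=> i im; rewrite /ext Ct // size_tuple ltnW.
apply: fin_bigcup_measurable; first exact: finite_finset.
move=> t _; case: (pselect (E (ext t))) => H.
  have -> : [set om : T | cyl t om /\ E (ext t)] = cyl t.
    by apply/seteqP; split => om /=; [case | split].
  by apply: sub_sigma_algebra; exists (tval t).
have -> : [set om : T | cyl t om /\ E (ext t)] = set0.
  by apply/seteqP; split => om //= [].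
exact: measurable0.
Qed.
End Construction.

Theorem proposition1 (R : realType) (delta w : R) :
  0 < delta < 1 -> 0 < w < 1 ->
  exists (k : nat) (mu nu : probability (CylSpace k) R),
    (mu : set (CylSpace k) -> \bar R) <> nu /\
    let E := [set om : CylSpace k |
               ((1 / (4 * ln 2)) * ln (1 / delta) *
                  (ln (1 / delta) + 2 * ln ((1 - w) / w) - 3 * ln 2))%:E
               < Dinf w mu nu om]%E in
    measurable E /\ (delta%:E <= mu E)%E.
Proof.
move=> /andP[d0 d1] /andP[w0 w1].
set l := ln (2:R).
have l0 : 0 < l by rewrite ln_gt0 // ltr1n.
set L := ln (1 / delta).
have L0 : 0 < L by rewrite ln_gt0 // div1r invf_gt1.
set c := ln ((1 - w) / w).
set x := L / l.
have x0 : 0 <= x by rewrite divr_ge0 // ltW.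
set t := Num.truncn x.
have /andP[tx xt] := truncn_itv x0.
set m := t.+1.
set S := \sum_(n < m) dKL w (muM R m) \d_zp (nseq n ord0).
have KB := @KL_bound R w w0 w1 m.
have S0 : 0 <= S by apply: sumr_ge0 => n _; case: (KB n (ltn_ord n)).
have Hg : gq R l c m%:R < S.
  apply: (@sum_bound R l c (fun n => dKL w (muM R m) \d_zp (nseq n ord0)) m) => //.
  by move=> n nm; case: (KB n nm).
have HT := @final_ineq R l L c m%:R S l0 L0 xt Hg S0.
have Dq i : (t <= i)%N -> Dinf w (muM R m) \d_zp (qp m i) = S%:E.
  move=> ti; rewrite -(@Dinf_zp R w w0 w1 m); apply: (@Dinf_agree R w w0 w1) => j jm.
  rewrite /qp /zp; case: eqVneq => // ji; subst j.
  by move: jm; rewrite ltnS ltnNge ti.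
exists 1%N, (muM R m), (@dirac _ (CylSpace 1) zp R).
split.
  move=> H.
  have h1 : @cylp R 1 (muM R m) (nseq 0 ord0 ++ [:: lift ord0 ord0]) =
            @cylp R 1 \d_zp (nseq 0 ord0 ++ [:: lift ord0 ord0]) by rewrite /cylp H.
  move: h1; rewrite (@cylp1 R m 0 _ l1_neq0) cylpz (negbTE (@zmem1 0 _ l1_neq0)) /=.
  by move/eqP; rewrite gt_eqF // hh_gt0.
move=> E; split.
  by rewrite /E; apply: (@measurable_pred R w w0 w1 m (fun d => (_ < d)%E)).
have memE i : (t <= i)%N -> qp m i \in E.
  by move=> ti; rewrite in_setE /E /= Dq // lte_fin.
suff : (delta%:E <= muM R m E)%E by [].
rewrite muME lee_fin big_ord_recr /= big_ord_recr /=.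
rewrite (memE t (leqnn t)) (memE t.+1 (leqnSn t)) !mulr1.
rewrite /cw ltnSn ltnn -addrA hhS.
have dh : delta <= hh R t.
  rewrite -ler_ln ?posrE ?hh_gt0 //.
  rewrite /hh lnXn ?invr_gt0 // lnV ?posrE // mulNrn.
  have : ln delta = - L by rewrite /L div1r lnV ?posrE // opprK.
  move=> ->; rewrite lerN2.
  by move: tx; rewrite ler_pdivlMr // mulr_natl.
apply: (le_trans dh); rewrite lerDr; apply: sumr_ge0 => i _.
by rewrite mulr_ge0 ?cw_ge0.
Qed.
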